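(* Let $n\geq5$ and $J=J(P_n)$. Let $u,v\in G(J)$ be such that $x_{n-1}x_{n-4}$ divides $u$ and $x_nx_{n-3}$ divides $v$. Then $uv$ is not a minimal generator of $J^2$. Moreover, there exists a $2$-fold product $pw\in F(J^2)$ such that $pw$ divides $uv$ and $pw>_{\mathcal R}uv$.
   Context: Let $K$ be a field. For $m\geq 1$, $P_m$ is the path graph on vertices $x_1,\ldots,x_m$ with edges $\{x_i,x_{i+1}\}$. The cover ideal $J(P_m)$ is generated by the monomials $\prod_{x\in C}x$ with $C$ a minimal vertex cover of $P_m$. For a monomial ideal $I$, $G(I)$ is its set of minimal monomial generators and $F(I^2)=\{uv:u,v\in G(I)\}$. The rooted list $\mathcal R(P_m)$ is defined recursively: $\mathcal R(P_1)$ empty; $\mathcal R(P_2)=x_1,x_2$; $\mathcal R(P_3)=x_2,x_1x_3$; $\mathcal R(P_4)=x_1x_3,x_2x_3,x_2x_4$; for $m\geq5$, if $\mathcal R(P_{m-2})=u_1,\ldots,u_r$ and $\mathcal R(P_{m-3})=v_1,\ldots,v_s$, then $\mathcal R(P_m)=x_{m-1}u_1,\ldots,x_{m-1}u_r,x_mx_{m-2}v_1,\ldots,x_mx_{m-2}v_s$; it lists each element of $G(J(P_m))$ once. With $\mathcal R(P_m)=u_1,\ldots,u_q$, each $M\in F(J(P_m)^2)$ can be written $u_1^{a_1}\cdots u_q^{a_q}$ with $a_i\geq0$, $\sum a_i=2$; the maximal expression of $M$ is the one with lexicographically largest exponent vector. The rooted order on $F(J(P_m)^2)$: $M>_{\mathcal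 R}N$ iff the exponent vector of the maximal expression of $M$ is lexicographically larger than that of $N$. *)

(* Defs.v *)
From mathcomp Require Import all_boot.
Set Implicit Arguments. Unset Strict Implicit. Unset Printing Implicit Defensive.

(* A monomial in x_1, x_2, ... is encoded as the sorted (w.r.t. leq) multiset of
   its variable indices: x_1^2 x_3 is [:: 1; 1; 3].  Indices start at 1. *)
Definition mono := seq nat.

Definition mmul (s t : mono) : mono := sort leq (s ++ t).

Definition mdvd (s t : mono) : bool :=
  all (fun i => count_mem i s <= count_mem i t) s.

Definition mpow (u : mono) (k : nat) : mono := iter k (mmul u) [::].
Definition mexpr (R : seq mono) (a : seq nat) : mono :=
  foldr mmul [::] [seq mpow p.1 p.2 | p <- zip R a].

(* Path graph P_n on x_1..x_n; a vertex subset is a {set 'I_n}, with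
   i : 'I_n standing for the vertex x_{i+1}. *)
Definition is_cover (n : nat) (C : {set 'I_n}) : Prop :=
  forall i j : 'I_n, (val j = (val i).+1)%N -> (i \in C) || (j \in C).

Definition is_min_cover (n : nat) (C : {set 'I_n}) : Prop :=
  is_cover C /\ forall D : {set 'I_n}, D \proper C -> ~ is_cover D.

Definition cover_mono (n : nat) (C : {set 'I_n}) : mono :=
  sort leq [seq (val i).+1 | i <- enum C].

Definition inGJ (n : nat) (u : mono) : Prop :=
  exists C : {set 'I_n}, is_min_cover C /\ u = cover_mono C.

Definition inF2 (n : nat) (M : mono) : Prop :=
  exists u v, inGJ n u /\ inGJ n v /\ M = mmul u v.

Definition inGJ2 (n : nat) (M : mono) : Prop :=
  inF2 n M /\ forall N, inF2 n N -> mdvd N M -> N = M.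

Fixpoint rlist (m : nat) : seq mono :=
  match m with
  | 0 => [::]
  | 1 => [::]
  | 2 => [:: [:: 1]; [:: 2]]
  | 3 => [:: [:: 2]; [:: 1; 3]]
  | 4 => [:: [:: 1; 3]; [:: 2; 3]; [:: 2; 4]]
  | S (S ((S ((S (S _)) as y)) as x)) =>
      (* x = m - 2, y = m - 3, m >= 5 *)
      [seq mmul [:: m.-1] u | u <- rlist x] ++
      [seq mmul [:: m.-2; m] v | v <- rlist y]
  end.

Fixpoint lexlt (a b : seq nat) : bool :=
  match a, b with
  | x :: a', y :: b' => (x < y) || ((x == y) && lexlt a' b')
  | _, _ => false
  end.

Definition is_expr (R : seq mono) (M : mono) (a : seq nat) : Prop :=
  size a = size R /\ sumn a = 2 /\ mexpr R a = M.

Definition is_max_expr (R : seq mono) (M : mono) (a : seq nat) : Prop :=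
  is_expr R M a /\ forall b, is_expr R M b -> ~~ lexlt a b.

Definition rooted_gt (R : seq mono) (M N : mono) : Prop :=
  exists a b, is_max_expr R M a /\ is_max_expr R N b /\ lexlt b a.

Example rl5 : rlist 5 = [:: [:: 2; 4]; [:: 1; 3; 4]; [:: 1; 3; 5]; [:: 2; 3; 5]]. Proof. by []. Qed.

(* Main.v *)
Require Import Defs.
From mathcomp Require Import all_boot.
From mathcomp Require Import zify.
Set Implicit Arguments. Unset Strict Implicit. Unset Printing Implicit Defensive.


Definition MC (m : nat) (f : nat -> bool) : Prop :=
  [/\ forall k, f k -> 0 < k <= m,
      forall k, 0 < k < m -> f k || f k.+1 &
      forall k, f k -> ((1 < k) && ~~ f k.-1) || ((k < m) && ~~ f k.+1)].
Definition mc m (s : seq nat) := sorted ltn s /\ MC m (fun k => k \in s).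

Lemma MC_ext m f g : f =1 g -> MC m f -> MC m g.
Proof.
move=> e [H1 H2 H3]; split=> k; rewrite ?e.
- by rewrite -e; apply: H1.
- by rewrite -!e; apply: H2.
- by rewrite -!e; apply: H3.
Qed.

Lemma MC_up1 m f : 4 <= m -> MC m.-2 f -> MC m (fun k => (k == m.-1) || f k).
Proof.
move=> hm [H1 H2 H3]; split.
- move=> k /orP[/eqP->|/H1]; lia.
- move=> k hk; have := H2 k; lia.
- move=> k /orP[/eqP->|fk].
  + have : ~~ f m by apply/negP => /H1; lia.
    have -> : m.-1.+1 = m by lia. lia.
  + have := H3 k fk; have := H1 k fk; lia.
Qed.

Lemma MC_up2 m f : 5 <= m -> MC (m - 3) f ->
  MC m (fun k => [|| k == m.-2, k == m | f k]).
Proof.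
move=> hm [H1 H2 H3]; split.
- move=> k /or3P[/eqP->|/eqP->|/H1]; lia.
- move=> k hk; have := H2 k; lia.
- move=> k /or3P[/eqP->|/eqP->|fk].
  + have : ~~ f m.-1 by apply/negP => /H1; lia.
    have -> : m.-2.+1 = m.-1 by lia. lia.
  + have : ~~ f m.-1 by apply/negP => /H1; lia.
    lia.
  + have := H3 k fk; have := H1 k fk; lia.
Qed.

Lemma MC_down1 m f : 5 <= m -> MC m f -> ~~ f m ->
  MC m.-2 (fun k => f k && (k < m.-1)) /\ f m.-1.
Proof.
move=> hm [H1 H2 H3] nfm.
have fm1 : f m.-1.
have := H2 m.-1. have -> : m.-1.+1 = m by lia. lia.
split=> //; split.
- move=> k /andP[/H1]; lia.
- move=> k hk; have := H2 k; lia.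
- move=> k /andP[fk hk]; have := H3 k fk; have := H1 k fk.
  case: (ltngtP k m.-2) => [lt|gt|eq].
  + lia.
  + lia.
  + subst k. have -> : m.-2.+1 = m.-1 by lia. rewrite fm1. lia.
Qed.

Lemma MC_down2 m f : 5 <= m -> MC m f -> f m ->
  [/\ MC (m - 3) (fun k => f k && (k < m.-2)), f m.-2 & ~~ f m.-1].
Proof.
move=> hm [H1 H2 H3] fm.
have nfm1 : ~~ f m.-1 by have := H3 m fm; lia.
have fm2 : f m.-2.
  have := H2 m.-2. have -> : m.-2.+1 = m.-1 by lia. lia.
split=> //; split.
- move=> k /andP[/H1]; lia.
- move=> k hk; have := H2 k; lia.
- move=> k /andP[fk hk]; have := H3 k fk; have := H1 k fk.
  case: (ltngtP k (m - 3)) => [lt|gt|eq].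
  + lia.
  + lia.
  + subst k. have -> : (m - 3).+1 = m.-2 by lia. rewrite fm2. lia.
Qed.

Lemma sort_ltn (s : seq nat) : uniq s -> sorted ltn (sort leq s).
Proof. by move=> u; rewrite ltn_sorted_uniq_leq sort_uniq u sort_sorted //; apply: leq_total. Qed.

Lemma mem_mmul (s t : mono) x : (x \in mmul s t) = (x \in s) || (x \in t).
Proof. by rewrite /mmul mem_sort mem_cat. Qed.

Lemma count_mmul (s t : mono) x : count_mem x (mmul s t) = count_mem x s + count_mem x t.
Proof. by rewrite /mmul count_sort count_cat. Qed.

Lemma eq_mono (s t : seq nat) : sorted ltn s -> sorted ltn t -> s =i t -> s = t.
Proof. apply: irr_sorted_eq; [exact: ltn_trans | exact: ltnn]. Qed.

Lemma mc_uniq m s : mc m s -> uniq s.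
Proof. by case=> h _; apply: (sorted_uniq ltn_trans ltnn). Qed.

Lemma mc_bound m s x : mc m s -> x \in s -> 0 < x <= m.
Proof. by case=> _ [H1 _ _] /H1. Qed.

Definition key (s : seq nat) := sumn [seq 2 ^ x | x <- s].

Lemma key_cat s t : key (s ++ t) = key s + key t.
Proof. by rewrite /key map_cat sumn_cat. Qed.

Lemma key_perm s t : perm_eq s t -> key s = key t.
Proof. by move=> p; apply: perm_sumn; apply: perm_map. Qed.

Lemma key_mmul s t : key (mmul s t) = key s + key t.
Proof. by rewrite -key_cat; apply: key_perm; rewrite /mmul perm_sort. Qed.

Lemma key_sub (T A : seq nat) : uniq T -> uniq A -> {subset T <= A} -> key T <= key A.
Proof.
move=> uT uA sTA.
have pA : perm_eq ([seq x <- A | mem T x] ++ [seq x <- A | predC (mem T) x]) A by rewrite perm_filterC.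
rewrite -(key_perm pA) key_cat.
have -> : key [seq x <- A | mem T x] = key T.
  apply: key_perm; apply: uniq_perm => //; first by apply: filter_uniq.
  by move=> x; rewrite mem_filter /=; case xT: (x \in T) => //=; rewrite sTA.
exact: leq_addr.
Qed.

Lemma key_iota b : key (iota 0 b) < 2 ^ b.
Proof.
elim: b => [|b IH] //.
have -> : iota 0 b.+1 = iota 0 b ++ [:: b] by rewrite -addn1 iotaD.
rewrite key_cat /key /= addn0 expnS.
rewrite /key in IH; lia.
Qed.

Lemma key_ub (s : seq nat) b : uniq s -> (forall x, x \in s -> x < b) -> key s < 2 ^ b.
Proof.
move=> us hb; apply: leq_ltn_trans (key_iota b).
apply: key_sub => //; first exact: iota_uniq.
by move=> x /hb; rewrite mem_iota.
Qed.

Lemma key_lb (T A : seq nat) : uniq T -> uniq A -> {subset T <= A} -> key T <= key A.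
Proof. exact: key_sub. Qed.

Definition mcb m (s : seq nat) : bool :=
  [&& sorted ltn s, all (fun k => 0 < k <= m) s,
      all (fun k => (k \in s) || (k.+1 \in s)) (iota 1 m.-1) &
      all (fun k => ((1 < k) && (k.-1 \notin s)) || ((k < m) && (k.+1 \notin s))) s].

Lemma mcb_mc m s : mcb m s -> mc m s.
Proof.
case/and4P=> h1 /allP h2 /allP h3 /allP h4; split=> //; split.
- by move=> k /h2.
- by move=> k hk; apply: h3; rewrite mem_iota; lia.
- by move=> k /h4.
Qed.

Lemma mc_mcb m s : mc m s -> mcb m s.
Proof.
case=> h1 [h2 h3 h4]; apply/and4P; split=> //.
- by apply/allP=> k /h2.
- by apply/allP=> k; rewrite mem_iota => hk; apply: h3; lia.
- by apply/allP=> k /h4.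
Qed.

Lemma rlist_step k : rlist k.+4.+1 =
  [seq mmul [:: k.+4] u | u <- rlist k.+3] ++ [seq mmul [:: k.+3; k.+4.+1] v | v <- rlist k.+2].
Proof. by []. Qed.

Lemma rlist_sound m s : 2 <= m -> s \in rlist m -> mc m s.
Proof.
elim/ltn_ind: m s => m IH s hm.
case: m IH hm => [|[|[|[|[|k]]]]] IH hm //.
- by move=> hs; apply: mcb_mc; move: hs; rewrite !inE => /orP[] /eqP ->.
- by move=> hs; apply: mcb_mc; move: hs; rewrite !inE => /orP[] /eqP ->.
- by move=> hs; apply: mcb_mc; move: hs; rewrite !inE => /or3P[] /eqP ->.
rewrite rlist_step mem_cat => /orP[] /mapP [u hu ->].
- have mu := IH k.+3 (ltac:(lia)) u (ltac:(lia)) hu.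
  split.
    apply: sort_ltn; rewrite /= (mc_uniq mu) andbT.
    by apply/negP => /(mc_bound mu); lia.
  apply: MC_ext (MC_up1 (m := k.+4.+1) _ _) => //.
    by move=> x; rewrite mem_mmul inE.
  by case: mu.
- have mu := IH k.+2 (ltac:(lia)) u (ltac:(lia)) hu.
  split.
    have h3 : k.+3 \notin u by apply/negP => /(mc_bound mu); lia.
    have h5 : k.+4.+1 \notin u by apply/negP => /(mc_bound mu); lia.
    apply: sort_ltn; rewrite /= inE negb_or h3 h5 (mc_uniq mu) !andbT; lia.
  apply: (MC_ext _ (MC_up2 (m := k.+4.+1) (f := fun x => x \in u) _ _)) => //.
    by move=> x; rewrite mem_mmul !inE orbA.
  by case: mu.
Qed.

Lemma base_complete m (f : nat -> bool) : 2 <= m <= 4 ->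
  mcb m [seq x <- iota 1 m | f x] -> [seq x <- iota 1 m | f x] \in rlist m.
Proof.
case: m => [|[|[|[|[|m]]]]] // _ /=.
- by case: (f 1); case: (f 2).
- by case: (f 1); case: (f 2); case: (f 3).
- by case: (f 1); case: (f 2); case: (f 3); case: (f 4).
Qed.

Lemma rlist_complete m s : 2 <= m -> mc m s -> s \in rlist m.
Proof.
elim/ltn_ind: m s => m IH s hm ms.
have [m4|m5] := leqP m 4.
  have E : s = [seq x <- iota 1 m | x \in s].
    apply: eq_mono; first by case: ms.
      by apply: sorted_filter; [exact: ltn_trans | exact: iota_ltn_sorted].
    move=> x; rewrite mem_filter mem_iota.
    have := mc_bound ms (x := x); case: (x \in s); lia.
  rewrite E; apply: base_complete; first lia.
  by rewrite -E; apply: mc_mcb.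
case: m IH hm ms m5 => [|[|[|[|[|k]]]]] IH hm ms m5 //.
have ub := mc_bound ms.
have [M|nM] := boolP (k.+4.+1 \in s).
- case: ms => sos MCs.
  case: (MC_down2 (m := k.+4.+1) (f := fun x => x \in s) m5 MCs M) => MCt f3 nf4.
  set t := [seq x <- s | x < k.+3].
  have mt : mc k.+2 t.
    split; first by apply: sorted_filter => //; exact: ltn_trans.
    by apply: MC_ext MCt => x; rewrite mem_filter andbC.
  have ht := IH k.+2 (ltac:(lia)) t (ltac:(lia)) mt.
  have -> : s = mmul [:: k.+3; k.+4.+1] t.
    apply: eq_mono => //.
      apply: sort_ltn; rewrite /= inE (mc_uniq mt) !mem_filter ltnn /= andbT.
      apply/andP; split; first lia.
      by rewrite ltnNge leqW // leqnSn.
    move=> x; rewrite mem_mmul !inE mem_filter.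
    have [->|n3] := eqVneq x k.+3; first by rewrite f3.
    have [->|n4] := eqVneq x k.+4; first by rewrite (negbTE nf4); lia.
    have [->|n5] := eqVneq x k.+4.+1; first by rewrite M; lia.
    have := ub x; case: (x \in s); lia.
  by rewrite rlist_step mem_cat; apply/orP; right; apply/mapP; exists t.
- case: ms => sos MCs.
  case: (MC_down1 (m := k.+4.+1) (f := fun x => x \in s) m5 MCs nM) => MCt f4.
  set t := [seq x <- s | x < k.+4].
  have mt : mc k.+3 t.
    split; first by apply: sorted_filter => //; exact: ltn_trans.
    by apply: MC_ext MCt => x; rewrite mem_filter andbC.
  have ht := IH k.+3 (ltac:(lia)) t (ltac:(lia)) mt.
  have -> : s = mmul [:: k.+4] t.
    apply: eq_mono => //.
      by apply: sort_ltn; rewrite /= (mc_uniq mt) !mem_filter ltnn.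
    move=> x; rewrite mem_mmul !inE mem_filter.
    have [->|n4] := eqVneq x k.+4; first by rewrite f4.
    have [->|n5] := eqVneq x k.+4.+1; first by rewrite (negbTE nM); lia.
    have := ub x; case: (x \in s); lia.
  by rewrite rlist_step mem_cat; apply/orP; left; apply/mapP; exists t.
Qed.

Definition krel (x y : mono) := key x < key y.

Lemma krel_trans : transitive krel.
Proof. move=> y x z; exact: ltn_trans. Qed.

Lemma rlist_sorted m : 2 <= m -> sorted krel (rlist m).
Proof.
elim/ltn_ind: m => m IH hm.
case: m IH hm => [|[|[|[|[|k]]]]] IH hm //.
rewrite rlist_step sorted_pairwise; last exact: krel_trans.
rewrite pairwise_cat !pairwise_map; apply/and3P; split.
- apply/allrelP => x y /mapP[u hu ->] /mapP[v hv ->].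
  rewrite /krel !key_mmul.
  have mu : mc k.+3 u by apply: rlist_sound hu.
  have ku : key u < 2 ^ k.+4.
    apply: key_ub (mc_uniq mu) _ => z hz; have := mc_bound mu hz; lia.
  rewrite /key /= !addn0 -/(key u) -/(key v); move: ku; rewrite !expnS; lia.
- apply: sub_pairwise (_ : pairwise krel _); first by move=> x y; rewrite /krel /= !key_mmul; lia.
  by rewrite -sorted_pairwise; [apply: IH; lia | exact: krel_trans].
- apply: sub_pairwise (_ : pairwise krel _); first by move=> x y; rewrite /krel /= !key_mmul; lia.
  by rewrite -sorted_pairwise; [apply: IH; lia | exact: krel_trans].
Qed.

Lemma mem_cover n (C : {set 'I_n}) x :
  (x \in cover_mono C) = [exists i : 'I_n, (i \in C) && (x == i.+1)].
Proof.
rewrite /cover_mono mem_sort; apply/mapP/existsP.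
- by case=> i; rewrite mem_enum => iC ->; exists i; rewrite iC eqxx.
- by case=> i /andP[iC /eqP->]; exists i; rewrite ?mem_enum.
Qed.

Lemma inGJ_mc n u : inGJ n u -> mc n u.
Proof.
case=> C [[cov minC] ->]; split.
  apply: sort_ltn; rewrite map_inj_uniq ?enum_uniq //.
  by move=> i j /= [] /val_inj.
split.
- by move=> k; rewrite mem_cover => /existsP[i /andP[_ /eqP->]]; have := ltn_ord i; lia.
- move=> k hk.
  have h1 : k.-1 < n by lia.
  have h2 : k < n by lia.
  have e : k = k.-1.+1 by lia.
  have := cov (Ordinal h1) (Ordinal h2) e.
  case/orP => H; rewrite !mem_cover; apply/orP; [left|right]; apply/existsP.
  + by exists (Ordinal h1); rewrite H /=; apply/eqP; lia.
  + by exists (Ordinal h2); rewrite H /=.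
- move=> k; rewrite mem_cover => /existsP[i /andP[iC /eqP ki]].
  apply/negPn/negP => H.
  apply: (minC (C :\ i)); first by rewrite properD1.
  move=> a b hab0; have hab : (b : nat) = (a : nat).+1 := hab0; rewrite !in_setD1.
  have [ai|ai] := eqVneq a i.
  + subst a.
    have -> : b != i by apply/eqP => bi; move: hab; rewrite bi; lia.
    move: H; rewrite negb_or => /andP[_]; rewrite negb_and negbK => /orP[|].
      have := ltn_ord b; lia.
    rewrite mem_cover => /existsP[j /andP[jC /eqP]] hj.
    by have -> : b = j by apply: ord_inj; lia.
  + rewrite /=.
    have [bi|bi] := eqVneq b i.
    * subst b. rewrite /=.
      move: H; rewrite negb_or => /andP[]; rewrite negb_and negbK => /orP[|].
        lia.
      rewrite mem_cover => /existsP [j /andP [jC /eqP hj]] _.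
      have -> : a = j by apply: ord_inj; lia.
      by rewrite jC.
    * exact: cov a b hab0.
Qed.

Lemma mc_inGJ n s : mc n s -> inGJ n s.
Proof.
move=> ms; have ub := mc_bound ms.
exists [set i : 'I_n | i.+1 \in s].
have E : cover_mono [set i : 'I_n | i.+1 \in s] = s.
  apply: eq_mono; last first.
  - move=> x; rewrite mem_cover; apply/existsP/idP.
    + by case=> i; rewrite inE => /andP[h /eqP ->].
    + move=> xs; have hx := ub x xs.
      have h : x.-1 < n by lia.
      exists (Ordinal h); rewrite inE /=.
      have -> : x.-1.+1 = x by lia.
      by rewrite xs eqxx.
  - by case: ms.
  - apply: sort_ltn; rewrite map_inj_uniq ?enum_uniq //.
    by move=> i j /= [] /val_inj.
split; last by rewrite E.
case: ms => _ [H1 H2 H3]; split.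
- move=> i j hij; rewrite !inE.
  have hj : (j : nat) = i.+1 := hij.
  rewrite hj; apply: H2; have := ltn_ord j; lia.
- move=> D /properP [sub [i iC iD]] cD.
  rewrite inE in iC; have := H3 _ iC; case/orP => /andP[h1 h2].
  + have ha : i.-1 < n by have := ltn_ord i; lia.
    have e : (i : nat) = (Ordinal ha).+1 by rewrite /=; lia.
    case/orP: (cD (Ordinal ha) i e) => [aD|]; last by rewrite (negbTE iD).
    have := subsetP sub _ aD; rewrite inE /= => h.
    have e2 : i.+1.-1 = i.-1.+1 by lia.
    by move: h2; rewrite e2 h.
  + have hb : i.+1 < n by lia.
    have e : ((Ordinal hb) : nat) = i.+1 by [].
    case/orP: (cD i (Ordinal hb) e) => [|bD]; first by rewrite (negbTE iD).
    have := subsetP sub _ bD; rewrite inE /= => h.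
    by move: h2; rewrite h.
Qed.

Lemma count_mpow x u k : count_mem x (mpow u k) = k * count_mem x u.
Proof. elim: k => [|k IH] //; rewrite /mpow iterS -/(mpow u k) count_mmul IH mulSn. by []. Qed.

Lemma count_mexpr x R a : count_mem x (mexpr R a) = sumn [seq p.2 * count_mem x p.1 | p <- zip R a].
Proof.
rewrite /mexpr; elim: (zip R a) => [|p L IH] //=.
by rewrite count_mmul count_mpow IH.
Qed.

Lemma sorted_mexpr R a : sorted leq (mexpr R a).
Proof.
rewrite /mexpr; case: (zip R a) => [|p L] //=.
by apply: sort_sorted; apply: leq_total.
Qed.

Lemma sumn_zip (F : mono -> nat) R a : size a = size R ->
  sumn [seq p.2 * F p.1 | p <- zip R a] = \sum_(k < size R) nth 0 a k * F (nth [::] R k).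
Proof.
elim: R a => [|r R IH] [|x a] //= hs; first by rewrite big_ord0.
have hs' : size a = size R by lia.
by rewrite big_ord_recl /= IH.
Qed.

Lemma delta_sum q i (F : nat -> nat) : i < q -> \sum_(k < q) (k == i :> nat) * F k = F i.
Proof.
move=> hi; rewrite -[RHS](_ : (if i < q then F i else 0) = F i); last by rewrite hi.
rewrite -(big_ord1_eq addn F i q) [RHS]big_mkcond; apply: eq_bigr => k _.
by case: (k == i :> nat); rewrite ?mul1n ?mul0n.
Qed.

Lemma expr_pair R a i j x : size a = size R -> i < size R -> j < size R ->
  (forall k, k < size R -> nth 0 a k = (k == i) + (k == j)) ->
  count_mem x (mexpr R a) = count_mem x (nth [::] R i) + count_mem x (nth [::] R j).
Proof.
move=> sa hi hj ha.
rewrite count_mexpr (sumn_zip (fun r => count_mem x r)) //.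
rewrite (eq_bigr (fun k : 'I_(size R) => (k == i :> nat) * count_mem x (nth [::] R k) + (k == j :> nat) * count_mem x (nth [::] R k))); last first.
  by move=> k _; rewrite ha // mulnDl.
rewrite big_split /=.
by rewrite (delta_sum (fun k => count_mem x (nth [::] R k))) // (delta_sum (fun k => count_mem x (nth [::] R k))).
Qed.

Lemma sum0 b : sumn b = 0 -> forall k, nth 0 b k = 0.
Proof.
elim: b => [|x b IH] /= h k; first by rewrite nth_nil.
case: k => [|k] /=; lia || (apply: IH; lia).
Qed.

Lemma sum1 b : sumn b = 1 -> exists j, j < size b /\ forall k, nth 0 b k = (k == j).
Proof.
elim: b => [|x b IH] //= h.
case: x h => [|[|x]] h //=.
- have [j [hj hk]] := IH (ltac:(lia)); exists j.+1; split => //.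
  by case=> [|k] //=.
- have h0 : sumn b = 0 by lia.
  exists 0; split => //; case=> [|k] //=; by rewrite sum0.
Qed.

Lemma sum2 b : sumn b = 2 ->
  exists i j, [/\ i <= j, j < size b & forall k, nth 0 b k = (k == i) + (k == j)].
Proof.
elim: b => [|x b IH] //= h.
case: x h => [|[|[|x]]] h //=.
- have [i [j [hij hj hk]]] := IH (ltac:(lia)); exists i.+1, j.+1; split => //.
  by case=> [|k] //=.
- have [j [hj hk]] := sum1 (ltac:(lia) : sumn b = 1); exists 0, j.+1; split => //.
  by case=> [|k] //=; rewrite hk.
- have h0 : sumn b = 0 by lia.
  exists 0, 0; split => //; case=> [|k] //=; by rewrite sum0.
Qed.

Definition mkvec q i j := [seq (k == i) + (k == j) | k <- iota 0 q].

Lemma size_mkvec q i j : size (mkvec q i j) = q.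
Proof. by rewrite size_map size_iota. Qed.

Lemma nth_mkvec q i j k : k < q -> nth 0 (mkvec q i j) k = (k == i) + (k == j).
Proof. by move=> hk; rewrite (nth_map 0) ?size_iota // nth_iota. Qed.

Lemma nth_mkvec_ge q i j k : q <= k -> nth 0 (mkvec q i j) k = 0.
Proof. by move=> hk; rewrite nth_default // size_mkvec. Qed.

Lemma sumn_mkvec q i j : i < q -> j < q -> sumn (mkvec q i j) = 2.
Proof.
move=> hi hj.
have E : forall (v : seq nat) q, size v = q -> [seq p.2 * 1 | p <- zip (nseq q ([::] : mono)) v] = v.
  by elim=> [|x v IH] [|q'] //= hs; rewrite muln1 IH //; lia.
have := @sumn_zip (fun _ => 1) (nseq q [::]) (mkvec q i j).
rewrite size_nseq size_mkvec => /(_ erefl) /=.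
rewrite E ?size_mkvec // => ->.
rewrite (eq_bigr (fun k : 'I_q => (k == i :> nat) * 1 + (k == j :> nat) * 1)); last first.
  by move=> k _; rewrite nth_mkvec // mulnDl.
by rewrite big_split /= (delta_sum (fun _ => 1)) // (delta_sum (fun _ => 1)).
Qed.

Lemma lexlt_irr a : ~~ lexlt a a.
Proof. by elim: a => [|x a IH] //=; rewrite ltnn eqxx. Qed.

Lemma lexlt_trans a b c : lexlt a b -> lexlt b c -> lexlt a c.
Proof.
elim: a b c => [|x a IH] [|y b] [|z c] //=.
case/orP => [h1|/andP[/eqP e1 h1]]; case/orP => [h2|/andP[/eqP e2 h2]].
- by rewrite (ltn_trans h1 h2).
- by subst; rewrite h1.
- by subst; rewrite h2.
- by subst; rewrite eqxx (IH _ _ h1 h2) orbT.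
Qed.

Lemma lexlt_total a b : size a = size b -> a != b -> lexlt a b || lexlt b a.
Proof.
elim: a b => [|x a IH] [|y b] /= hs0 hne //; try by [lia | rewrite eqxx in hne].
have hs : size a = size b := succn_inj hs0.
case: (ltngtP x y) => //= e; subst.
apply: IH => //.
by apply: contra hne => /eqP ->.
Qed.

Lemma lexlt_nth a b t : size a = size b -> t < size a ->
  (forall s, s < t -> nth 0 b s = nth 0 a s) -> nth 0 b t < nth 0 a t -> lexlt b a.
Proof.
elim: t a b => [|t IH] [|x a] [|y b] /= hs0 ht hlt hnt //; try lia.
have hs : size a = size b := succn_inj hs0.
have e := hlt 0 (ltn0Sn t); rewrite /= in e; subst.
rewrite eqxx ltnn /=; apply: IH => //.
by move=> s hs'; apply: (hlt s.+1).
Qed.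

Fixpoint vecs q : seq (seq nat) :=
  if q is q'.+1 then [seq x :: v | x <- [:: 0; 1; 2], v <- vecs q'] else [:: [::]].

Lemma mem_vecs b : all (fun x => x <= 2) b -> b \in vecs (size b).
Proof.
elim: b => [|x b IH] //= /andP[hx hb].
have := @allpairs_f _ _ _ (fun x v => x :: v) [:: 0; 1; 2] (vecs (size b)) x b.
apply; last exact: IH.
by rewrite !inE; lia.
Qed.

Lemma le_sumn b x : x \in b -> x <= sumn b.
Proof.
elim: b => [|y b IH] //=; rewrite inE => /orP[/eqP->|/IH]; lia.
Qed.

Lemma list_max (L : seq (seq nat)) : L != [::] -> exists m, m \in L /\ forall y, y \in L -> ~~ lexlt m y.
Proof.
elim: L => [|x L IH] // _.
case: L IH => [|z L] IH.
  by exists x; split; rewrite ?inE // => y; rewrite inE => /eqP ->; exact: lexlt_irr.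
have [m [mL hm]] := IH isT.
case hmx: (lexlt m x).
- exists x; split; first by rewrite inE eqxx.
  move=> y; rewrite inE => /orP[/eqP ->|yL]; first exact: lexlt_irr.
  apply/negP => hxy; have := hm y yL; by rewrite (lexlt_trans hmx hxy).
- exists m; split; first by rewrite inE mL orbT.
  by move=> y; rewrite inE => /orP[/eqP ->|/hm]; rewrite ?hmx.
Qed.

Lemma exists_max R M b0 : is_expr R M b0 -> exists bm, is_max_expr R M bm.
Proof.
move=> e0.
pose L := [seq b <- vecs (size R) | [&& size b == size R, sumn b == 2 & mexpr R b == M]].
have inL : forall b, is_expr R M b -> b \in L.
  move=> b [s1 [s2 s3]]; rewrite mem_filter s1 s2 s3 !eqxx /= -s1.
  apply: mem_vecs; apply/allP => x /le_sumn; lia.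
have [m [mL hm]] : exists m, m \in L /\ forall y, y \in L -> ~~ lexlt m y.
  apply: list_max; by apply/eqP => h; have := inL _ e0; rewrite h.
exists m; split; last by move=> b /inL /hm.
by move: mL; rewrite mem_filter => /andP[/and3P[/eqP ? /eqP ? /eqP ?] _].
Qed.

Lemma MC_min m f a b c : MC m f -> f b -> a.+1 = b -> c = b.+1 ->
  ((0 < a) && ~~ f a) || ((b < m) && ~~ f c).
Proof. case=> _ _ H3 fb e1 e2; have := H3 b fb; subst; rewrite /=; lia. Qed.

Lemma MC_cov m f a b : MC m f -> 0 < a -> a < m -> b = a.+1 -> f a || f b.
Proof. case=> _ H2 _ h1 h2 ->; apply: H2; lia. Qed.

Lemma MC_bd m f a : MC m f -> f a -> 0 < a <= m.
Proof. by case=> H1 _ _ /H1. Qed.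

Lemma struct_u n u : 5 <= n -> MC n u -> u (n - 1) -> ~~ u n.
Proof.
move=> hn hu u1.
apply/negP => un; have := MC_min (a := n - 1) (c := n.+1) hu un (ltac:(lia)) erefl; rewrite u1; lia.
Qed.

Lemma struct_v n v : 5 <= n -> MC n v -> v (n - 3) -> v n ->
  [/\ ~~ v (n - 1), v (n - 2) & ~~ v (n - 4)].
Proof.
move=> hn hv v3 v0.
have nv1 : ~~ v (n - 1).
  by have := MC_min (a := n - 1) (c := n.+1) hv v0 (ltac:(lia)) erefl; rewrite ltnn; lia.
have v2 : v (n - 2).
  by have := MC_cov (a := n - 2) (b := n - 1) hv (ltac:(lia)) (ltac:(lia)) (ltac:(lia)); rewrite (negbTE nv1) orbF.
split => //.
by have := MC_min (a := n - 4) (c := n - 2) hv v3 (ltac:(lia)) (ltac:(lia)); rewrite v2; lia.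
Qed.

Definition pseq n (A : mono) : mono := sort leq ([seq x <- A | x < n - 3] ++ [:: n - 2; n]).
Definition wseq n (C : mono) : mono := sort leq ([seq x <- C | x < n - 3] ++ [:: n - 3; n - 1]).

Lemma mem_pseq n A x : (x \in pseq n A) = ((x \in A) && (x < n - 3)) || (x == n - 2) || (x == n).
Proof. by rewrite /pseq mem_sort mem_cat mem_filter !inE andbC orbA. Qed.

Lemma mem_wseq n A x : (x \in wseq n A) = ((x \in A) && (x < n - 3)) || (x == n - 3) || (x == n - 1).
Proof. by rewrite /wseq mem_sort mem_cat mem_filter !inE andbC orbA. Qed.

Lemma pseq_mc n A : 5 <= n -> mc n A -> n - 4 \in A -> mc n (pseq n A).
Proof.
move=> hn mA A4; split.
  apply: sort_ltn; rewrite cat_uniq filter_uniq ?(mc_uniq mA) //=.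
  rewrite !inE !mem_filter; lia.
case: mA => _ MA.
have [H1 H2 H3] := MA.
apply: (MC_ext (f := fun x => ((x \in A) && (x < n - 3)) || (x == n - 2) || (x == n))).
  by move=> x; rewrite mem_pseq.
split.
- move=> k /orP[/orP[/andP[/H1]|]|]; lia.
- move=> k hk; have [->|ne] := eqVneq k (n - 4); first by rewrite A4; lia.
  have := H2 k; lia.
- move=> k /orP[/orP[/andP[fk hk]|/eqP ->]|/eqP ->].
  + have := H3 k fk; lia.
  + have -> : (n - 2).+1 = n - 1 by lia. lia.
  + have -> : n.-1 = n - 1 by lia. lia.
Qed.

Lemma wseq_mc n C : 5 <= n -> mc n C -> n - 3 \in C -> n \in C -> mc n (wseq n C).
Proof.
move=> hn mC C3 Cn; split.
  apply: sort_ltn; rewrite cat_uniq filter_uniq ?(mc_uniq mC) //=.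
  rewrite !inE !mem_filter; lia.
case: mC => _ MA.
have [nC1 C2 nC4] := struct_v hn MA C3 Cn.
have [H1 H2 H3] := MA.
apply: (MC_ext (f := fun x => ((x \in C) && (x < n - 3)) || (x == n - 3) || (x == n - 1))).
  by move=> x; rewrite mem_wseq.
split.
- move=> k /orP[/orP[/andP[/H1]|]|]; lia.
- move=> k hk; have := H2 k; lia.
- move=> k /orP[/orP[/andP[fk hk]|/eqP ->]|/eqP ->].
  + have [e|ne] := eqVneq k (n - 4); first by move: fk; rewrite e (negbTE nC4).
    have := H3 k fk; lia.
  + have -> : (n - 3).-1 = n - 4 by lia. lia.
  + have -> : (n - 1).+1 = n by lia. lia.
Qed.

Lemma decode_pair n (u v A C : nat -> bool) : 5 <= n -> MC n u -> MC n v -> MC n A -> MC n C ->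
  u (n - 4) -> u (n - 1) -> v (n - 3) -> v n ->
  (forall x, A x + C x = u x + v x) -> ~~ A n ->
  [/\ A (n - 4), A (n - 1), C (n - 3) & C n].
Proof.
move=> hn hu hv hA hC u4 u1 v3 v0 hc nAn.
have [nv1 v2 nv4] := struct_v hn hv v3 v0.
have nun := struct_u hn hu u1.
have Cn : C n by move: (hc n); rewrite (negbTE nAn) (negbTE nun) v0; case: (C n).
have nC1 : ~~ C (n - 1).
  have := MC_min (a := n - 1) (c := n.+1) hC Cn (ltac:(clear -hn; lia)) erefl; rewrite ltnn /= ?orbF.
  by case/andP.
have A1 : A (n - 1) by move: (hc (n - 1)); rewrite (negbTE nC1) (negbTE nv1) u1; case: (A _).
have C3 : C (n - 3).
  case u2: (u (n - 2)).
  - have nu3 : ~~ u (n - 3).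
      have := MC_min (a := n - 3) (c := n - 1) hu u2 (ltac:(clear -hn; lia)) (ltac:(clear -hn; lia)); rewrite u1 /= ?andbF ?orbF.
      by case/andP.
    have A2 : A (n - 2) by move: (hc (n - 2)); rewrite u2 v2; case: (A _); case: (C _).
    have nA3 : ~~ A (n - 3).
      have := MC_min (a := n - 3) (c := n - 1) hA A2 (ltac:(clear -hn; lia)) (ltac:(clear -hn; lia)); rewrite A1 /= ?andbF ?orbF.
      by case/andP.
    by move: (hc (n - 3)); rewrite (negbTE nu3) v3 (negbTE nA3); case: (C _).
  - have u3 : u (n - 3).
      by have := MC_cov (a := n - 3) (b := n - 2) hu (ltac:(clear -hn; lia)) (ltac:(clear -hn; lia)) (ltac:(clear -hn; lia)); rewrite u2 orbF.
    by move: (hc (n - 3)); rewrite u3 v3; case: (A _); case: (C _).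
have [_ _ nC4] := struct_v hn hC C3 Cn.
split => //.
by move: (hc (n - 4)); rewrite u4 (negbTE nv4) (negbTE nC4); case: (A _).
Qed.


Lemma mk_expr R M X Y : X \in R -> Y \in R -> sorted leq M ->
  (forall x, count_mem x M = count_mem x X + count_mem x Y) ->
  is_expr R M (mkvec (size R) (index X R) (index Y R)).
Proof.
move=> XR YR sM hc.
have hX : index X R < size R by rewrite index_mem.
have hY : index Y R < size R by rewrite index_mem.
split; first by rewrite size_mkvec.
split; first by apply: sumn_mkvec.
apply: (sorted_eq leq_trans anti_leq) => //; first exact: sorted_mexpr.
rewrite /perm_eq; apply/allP => x _ /=; apply/eqP.
rewrite (expr_pair (i := index X R) (j := index Y R)) ?size_mkvec //.
  by rewrite !nth_index // hc.
by move=> k hk; rewrite nth_mkvec.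
Qed.

Lemma arith_eq (a c u v : bool) (x n : nat) : a + c = u + v ->
  ((c && (x < n - 3)) || (x == n - 3) || (x == n - 1)) + ((a && (x < n - 3)) || (x == n - 2) || (x == n)) =
  ((u && (x < n - 3)) || (x == n - 2) || (x == n)) + ((v && (x < n - 3)) || (x == n - 3) || (x == n - 1)).
Proof. case: a; case: c; case: u; case: v => /=; lia. Qed.

Lemma key_sort l : key (sort leq l) = key l.
Proof. by apply: key_perm; rewrite perm_sort. Qed.

Lemma pow_facts n : 5 <= n ->
  [/\ 2 ^ (n - 3) = 2 * 2 ^ (n - 4), 2 ^ (n - 2) = 4 * 2 ^ (n - 4) & 2 ^ (n - 1) = 8 * 2 ^ (n - 4)].
Proof.
move=> hn.
have e3 : n - 3 = (n - 4).+1 by lia.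
have e2 : n - 2 = (n - 4).+2 by lia.
have e1 : n - 1 = (n - 4).+3 by lia.
by rewrite e3 e2 e1 !expnS; split; lia.
Qed.

Ltac clia := repeat (match goal with H : _ |- _ => clear H end); lia.

Unset Implicit Arguments.

Theorem lemma4p1 (n : nat) (u v : mono) :
  5 <= n ->
  inGJ n u -> inGJ n v ->
  mdvd [:: n - 4; n - 1] u ->
  mdvd [:: n - 3; n] v ->
  ~ inGJ2 n (mmul u v) /\
  exists pw : mono,
    inF2 n pw /\ mdvd pw (mmul u v) /\ rooted_gt (rlist n) pw (mmul u v).
Proof.
move=> hn /inGJ_mc mu /inGJ_mc mv du dv.
have h2n : 2 <= n by apply: leq_trans hn.
have uu := mc_uniq mu; have uv := mc_uniq mv.
have u4 : n - 4 \in u.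
  have := allP du (n - 4) (mem_head _ _); rewrite (count_uniq_mem _ uu) /= eqxx.
  by case: (n - 4 \in u).
have u1 : n - 1 \in u.
  have := allP du (n - 1) (ltac:(by rewrite !inE eqxx orbT)); rewrite (count_uniq_mem _ uu) /= eqxx.
  by case: (n - 1 \in u); rewrite ?addn0 ?addn1.
have v3 : n - 3 \in v.
  have := allP dv (n - 3) (mem_head _ _); rewrite (count_uniq_mem _ uv) /= eqxx.
  by case: (n - 3 \in v).
have v0 : n \in v.
  have := allP dv n (ltac:(by rewrite !inE eqxx orbT)); rewrite (count_uniq_mem _ uv) /= eqxx.
  by case: (n \in v); rewrite ?addn0 ?addn1.
have nun := struct_u hn mu.2 u1.
have [nv1 v2 nv4] := struct_v hn mv.2 v3 v0.
set R := rlist n.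
have sR : sorted krel R by apply: rlist_sorted.
have uR : u \in R by apply: rlist_complete mu.
have vR : v \in R by apply: rlist_complete mv.
set P := pseq n u; set W := wseq n v.
have mP : mc n P := pseq_mc hn mu u4.
have mW : mc n W := wseq_mc hn mv v3 v0.
set pw := mmul P W.
have spw : sorted leq pw by apply: sort_sorted; apply: leq_total.
have E : forall b, is_expr R (mmul u v) b -> exists a, is_expr R pw a /\ lexlt b a.
  move=> b [sb [s2 eb]].
  have [i [j [hij hj hb]]] := sum2 s2.
  rewrite sb in hj.
  have hi : i < size R by move: hij hj; clia.
  set A := nth [::] R i; set C := nth [::] R j.
  have AR : A \in R := mem_nth _ hi.
  have CR : C \in R := mem_nth _ hj.
  have mA : mc n A by apply: rlist_sound AR.
  have mC : mc n C by apply: rlist_sound CR.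
  have uA := mc_uniq mA; have uC := mc_uniq mC.
  have hc : forall x, (x \in A) + (x \in C) = (x \in u) + (x \in v).
    move=> x; have := @expr_pair R b i j x sb hi hj (fun k _ => hb k).
    by rewrite eb count_mmul !count_uniq_mem.
  have ltij : i < j.
    have [e|ne] := eqVneq i j; last by move: ne hij; clia.
    move: (hc n); rewrite /C -e -/A (negbTE nun) v0.
    by case: (n \in A).
  have kAC : krel A C := sorted_ltn_nth krel_trans [::] sR i j hi hj ltij.
  have nAn : n \notin A.
    apply/negP => An.
    have nCn : n \notin C by move: (hc n); rewrite An (negbTE nun) v0; case: (n \in C).
    have kC : key C < 2 ^ n.
      apply: key_ub uC _ => x xC; have := mc_bound mC xC.
      have : x != n by apply: contraNneq nCn => <-.
      clia.
    have kA : key [:: n] <= key A by apply: key_sub => //; move=> y; rewrite inE => /eqP ->.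
    move: kA kAC kC; rewrite /krel /key /=; clia.
  have [A4 A1 C3 Cn] := decode_pair hn mu.2 mv.2 mA.2 mC.2 u4 u1 v3 v0 hc nAn.
  have [nC1 C2 nC4] := struct_v hn mC.2 C3 Cn.
  set P' := pseq n A; set W' := wseq n C.
  have P'R : P' \in R by apply: rlist_complete (pseq_mc hn mA A4).
  have W'R : W' \in R by apply: rlist_complete (wseq_mc hn mC C3 Cn).
  set K := index W' R; set L := index P' R.
  have hK : K < size R by rewrite index_mem.
  have hL : L < size R by rewrite index_mem.
  exists (mkvec (size R) K L); split.
    apply: mk_expr => // x.
    rewrite count_mmul (count_uniq_mem _ (mc_uniq mP)) (count_uniq_mem _ (mc_uniq mW)).
    rewrite (count_uniq_mem _ (mc_uniq (pseq_mc hn mA A4))) (count_uniq_mem _ (mc_uniq (wseq_mc hn mC C3 Cn))).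
    rewrite /P /W /P' /W' !mem_pseq !mem_wseq.
    by symmetry; apply: arith_eq; apply: hc.
  have [p3 p2 p1] := pow_facts hn.
  have kW : key W' < 2 ^ (n - 4) + 2 ^ (n - 3) + 2 ^ (n - 1).
    rewrite /W' /wseq key_sort key_cat.
    have : key [seq x <- C | x < n - 3] < 2 ^ (n - 4).
      apply: key_ub; first by apply: filter_uniq.
      move=> x; rewrite mem_filter => /andP[h1 h2].
      have : x != n - 4 by apply: contraNneq nC4 => <-.
      move: h1; clia.
    rewrite /key /=; clia.
  have kA : 2 ^ (n - 4) + 2 ^ (n - 3) + 2 ^ (n - 1) <= key A.
    case A2 : (n - 2 \in A).
    - have := @key_sub [:: n - 4; n - 2; n - 1] A.
      rewrite /= !inE uA; move=> /(_ (ltac:(move: hn; clia)) isT).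
      have : {subset [:: n - 4; n - 2; n - 1] <= A}.
        by move=> y; rewrite !inE => /or3P[] /eqP ->.
      move=> h /(_ h); rewrite /key /=; move: p3 p2 p1; clia.
    - have A3 : n - 3 \in A.
        have := MC_cov (a := n - 3) (b := n - 2) mA.2 (ltac:(move: hn; clia)) (ltac:(move: hn; clia)) (ltac:(move: hn; clia)).
        by rewrite A2 orbF.
      have := @key_sub [:: n - 4; n - 3; n - 1] A.
      rewrite /= !inE uA; move=> /(_ (ltac:(move: hn; clia)) isT).
      have : {subset [:: n - 4; n - 3; n - 1] <= A}.
        by move=> y; rewrite !inE => /or3P[] /eqP ->.
      move=> h /(_ h); rewrite /key /=; move: p3 p2 p1; clia.
  have Ki : K < i.
    rewrite ltnNge; apply/negP => iK.
    have [e|ne] := eqVneq i K.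
      have : A = W' by rewrite /A e /K nth_index.
      move=> eAW; move: kW kA; rewrite eAW; clia.
    have lt : i < K by move: iK ne; clia.
    have := sorted_ltn_nth krel_trans [::] sR i K hi hK lt.
    rewrite /K nth_index // -/A /krel; move: kW kA; clia.
  apply: (lexlt_nth (t := minn K L)).
  - by rewrite size_mkvec sb.
  - rewrite size_mkvec; move: hK; clia.
  - move=> s hs; rewrite hb nth_mkvec; move: hs Ki hij hK hL; clia.
  - rewrite hb nth_mkvec; move: Ki hij hK hL; clia.
have [bm hbm] := exists_max (mk_expr (M := mmul u v) uR vR (ltac:(by apply: sort_sorted; apply: leq_total)) (fun x => count_mmul u v x)).
have [a [ea lba]] := E bm hbm.1.
have [am ham] := exists_max ea.
have lt : lexlt bm am.
  have na := ham.2 a ea.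
  have [e|ne] := eqVneq a am; first by rewrite -e.
  have := @lexlt_total a am (etrans ea.1 (esym ham.1.1)) ne; rewrite (negbTE na) orbF.
  exact: lexlt_trans lba.
have RG : rooted_gt R pw (mmul u v) by exists am, bm.
have F2 : inF2 n pw by exists P, W; split; [apply: mc_inGJ | split; [apply: mc_inGJ |]].
have D : mdvd pw (mmul u v).
  apply/allP => x _.
  rewrite /pw count_mmul (count_uniq_mem _ (mc_uniq mP)) (count_uniq_mem _ (mc_uniq mW)) count_mmul (count_uniq_mem _ uu) (count_uniq_mem _ uv).
  rewrite /P /W mem_pseq mem_wseq.
  have [->|n3] := eqVneq x (n - 3); first by rewrite v3; move: hn; clia.
  have [->|n2] := eqVneq x (n - 2); first by rewrite v2; move: hn; clia.
  have [->|n1] := eqVneq x (n - 1); first by rewrite u1; move: hn; clia.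
  have [->|n0] := eqVneq x n; first by rewrite v0; move: hn; clia.
  move: hn n3 n2 n1 n0; case: (x \in u); case: (x \in v); clia.
split; last by exists pw.
case=> _ hmin.
have e := hmin pw F2 D.
move: RG; rewrite e => -[a' [b' [[ea' _] [[_ hb'] lt']]]].
by have := hb' a' ea'; rewrite lt'.
Qed.
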